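(* Let $X$ be a set and let $\mathcal{L}$ be a nest on $X$. A set $M\in\mathcal{L}$ is closed in the Alexandroff topology determined by $\triangleleft_{\mathcal{L}}$ if and only if $M=\bigcap\{L\in\mathcal{L} : M\subsetneq L\}$.
   Context: A nest on $X$ is a family of subsets of $X$ totally ordered by inclusion. Define $x\triangleleft_{\mathcal{L}} y$ iff there exists $L\in\mathcal{L}$ with $x\in L$ and $y\notin L$. For $A\subseteq X$ let ${\uparrow}A=\{x\in X : \exists y\in A,\ y\triangleleft_{\mathcal{L}} x\}$. The Alexandroff topology determined by $\triangleleft_{\mathcal{L}}$ consists of the sets $U\subseteq X$ with $U={\uparrow}U$; closed sets are their complements. *)

(* Defs.v *)
From mathcomp Require Import all_boot.
From mathcomp Require Import boolp classical_sets.
Set Implicit Arguments. Unset Strict Implicit. Unset Printing Implicit Defensive.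
Local Open Scope classical_set_scope.

Definition nest (X : Type) (L : set (set X)) : Prop :=
  forall A B, L A -> L B -> A `<=` B \/ B `<=` A.

Definition nest_rel (X : Type) (L : set (set X)) (x y : X) : Prop :=
  exists2 A, L A & A x /\ ~ A y.

Definition nest_up (X : Type) (L : set (set X)) (A : set X) : set X :=
  [set x | exists2 y, A y & nest_rel L y x].

Definition alex_open (X : Type) (L : set (set X)) (U : set X) : Prop :=
  U = nest_up L U.

Definition alex_closed (X : Type) (L : set (set X)) (F : set X) : Prop :=
  alex_open L (~` F).

(* Main.v *)
Require Import Defs.
From mathcomp Require Import all_boot.
From mathcomp Require Import boolp classical_sets.
Local Open Scope classical_set_scope.

Lemma up_compl (X : Type) (L : set (set X)) (hL : nest L) (M : set X) (hM : L M) :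
  nest_up L (~` M) = ~` \bigcap_(A in [set A | L A /\ M `<` A]) A.
Proof.
  apply/seteqP; split => x /=.
  - move=> [y ny [A LA [Ay nAx]]] Hall.
    apply: nAx; apply: Hall; split => //.
    case: (hL _ _ LA hM) => [AM|MA].
      by exfalso; apply: ny; apply: AM.
    split => // h; apply: ny; exact: h.
  - move=> nI.
    have [A [[LA [MA nAM]] nAx]] : exists A, ([set A | L A /\ M `<` A] A) /\ ~ A x.
      apply: contra_notP nI => H A HA.
      apply: contra_notP H => nAx; exists A; split => //.
    have [y [Ay ny]] : exists y, A y /\ ~ M y.
      apply: contra_notP nAM => H z Az.
      apply: contra_notP H => nz; exists z; split => //.
    exists y => //; exists A => //.
Qed.

Theorem proposition3p8 (X : Type) (L : set (set X)) (hL : nest L)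
  (M : set X) (hM : L M) :
  alex_closed L M <-> M = \bigcap_(A in [set A | L A /\ M `<` A]) A.
Proof.
  rewrite /alex_closed /alex_open (@up_compl X L hL M hM); split => h.
  - by have := congr1 setC h; rewrite !setCK.
  - by rewrite -h.
Qed.
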